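(* Let $(X,p)$ be an allocation with prices satisfying: $p(e)=k$ for every $e\in M^+$ and $p(e)=1$ for every $e\in M^-$; $(X,p)$ is an equilibrium with $\alpha_i=1$ for all $i\in N$; and for every MBB path $i_0\to\cdots\to i_s$ ($s\ge1$) and every $e\in X_{i_s}$, $\frac{v_{i_s}(X_{i_s}\setminus\{e\})}{w_{i_s}}\le\frac{v_{i_0}(X_{i_0})}{w_{i_0}}$. Define agent groups as follows: set $N'=N$, $R=0$; while $N'\neq\emptyset$, let $\ell\in\arg\min_{i\in N'}v_i(X_i)/w_i$ (smallest index on ties), increase $R$ by $1$, let $N_R$ be the set of agents of $N'$ reachable from $\ell$ by a directed path in the MBB graph (including $\ell$), and set $N'\leftarrow N'\setminus N_R$. Then: (1) for all $i\in N_r$, $j\in N_{r'}$ with $r<r'$, we have $v_i(e)=1$ for every $e\in X_j$; (2) $M^-\subseteq\bigcup_{i\in N_1}X_i$; (3) for every $r$, the group $N_r$ is WEQX: for all $i,j\in N_r$ and $e\in X_j$, $\frac{v_i(X_i)}{w_i}\ge\frac{v_j(X_j\setminus\{e\})}{w_j}$.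
   Context: Bivalued instance: agents $N$, goods $M$, additive valuations with $v_i(e)\in\{1,k\}$, $k>1$, weights $w_i>0$ summing to $1$. $M^-=\{e\in M:v_i(e)=1\ \forall i\in N\}$ and $M^+=M\setminus M^-$. Prices $p(e)>0$; $\alpha_{i,e}=v_i(e)/p(e)$, $\alpha_i=\max_e\alpha_{i,e}$, $\mathrm{MBB}_i=\{e:\alpha_{i,e}=\alpha_i\}$; $(X,p)$ is an equilibrium if $X_i\subseteq\mathrm{MBB}_i$ for all $i$. The MBB graph is the directed graph on $N$ with edge $i\to j$ iff $\mathrm{MBB}_i\cap X_j\ne\emptyset$. *)

(* Defs.v *)
From HB Require Import structures.
From mathcomp Require Import all_boot all_order all_algebra.
Set Implicit Arguments. Unset Strict Implicit. Unset Printing Implicit Defensive.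
Import Order.TTheory GRing.Theory Num.Theory.
Local Open Scope ring_scope.

(* Agents are 'I_n (ordered, for the "smallest index" tie-break), goods are a
   finType M. A (complete) allocation is given by an owner map own : M -> 'I_n,
   X_i = bundle own i. *)
Section Market.
Variables (R : realFieldType) (n : nat) (M : finType).
Variables (v : 'I_n -> M -> R) (w : 'I_n -> R) (own : M -> 'I_n) (p : M -> R).

Definition bundle (i : 'I_n) : {set M} := [set e | own e == i].

Definition valS (i : 'I_n) (S : {set M}) : R := \sum_(e in S) v i e.

Definition Mminus : {set M} := [set e | [forall i, v i e == 1]].
Definition Mplus : {set M} := ~: Mminus.

Definition alpha_ie (i : 'I_n) (e : M) : R := v i e / p e.
Definition alpha (i : 'I_n) : R := \big[Num.max/0]_(e : M) alpha_ie i e.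
Definition MBB (i : 'I_n) : {set M} := [set e | alpha_ie i e == alpha i].

Definition is_equilibrium : Prop := forall i, bundle i \subset MBB i.

Definition mbb_edge : rel 'I_n :=
  fun i j => [exists e, (e \in MBB i) && (e \in bundle j)].

Definition ratio (i : 'I_n) : R := valS i (bundle i) / w i.

Definition leaderb (Np : {set 'I_n}) (l : 'I_n) : bool :=
  [&& l \in Np,
      [forall j in Np, ratio l <= ratio j] &
      [forall j in Np, (ratio j <= ratio l) ==> (l <= j)%N]].

(* The grouping procedure; the fuel n is enough since every round removes
   at least the leader. *)
Fixpoint groups_aux (fuel : nat) (Np : {set 'I_n}) : seq {set 'I_n} :=
  match fuel with
  | 0 => [::]
  | f.+1 =>
      match [pick l | leaderb Np l] with
      | Some l =>
          let G := [set j in Np | connect mbb_edge l j] in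
          G :: groups_aux f (Np :\: G)
      | None => [::]
      end
  end.

(* groups = [:: N_1; N_2; ...; N_R] (0-based list index r-1 for N_r) *)
Definition groups : seq {set 'I_n} := groups_aux n [set: 'I_n].

End Market.

(* Main.v *)
Require Import Defs.
From HB Require Import structures.
From mathcomp Require Import all_boot all_order all_algebra.
Import Order.TTheory GRing.Theory Num.Theory.
Local Open Scope ring_scope.


Section Aux.
Variables (R : realFieldType) (n : nat) (M : finType).
Variables (v : 'I_n -> M -> R) (w : 'I_n -> R) (own : M -> 'I_n) (p : M -> R).

Lemma leader_exists (Np : {set 'I_n}) x0 : x0 \in Np -> exists l, leaderb v w own Np l.
Proof.
move=> Hx0.
case: (@arg_minP _ _ _ x0 (mem Np) (Defs.ratio v w own) Hx0) => m Hm Hmin; have {}Hm : m \in Np by exact: Hm.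
pose S := fun j : 'I_n => (j \in Np) && (Defs.ratio v w own j <= Defs.ratio v w own m).
have Sm : S m by rewrite /S Hm lexx.
case: (@arg_minnP _ m S (fun j : 'I_n => nat_of_ord j) Sm) => l /andP [Hl Hlm] Hlmin.
exists l; apply/and3P; split => //.
- apply/forallP => j; apply/implyP => Hj.
  exact: le_trans Hlm (Hmin j Hj).
- apply/forallP => j; apply/implyP => Hj; apply/implyP => Hjl.
  apply: Hlmin; rewrite /S Hj /=; exact: le_trans Hjl Hlm.
Qed.

Lemma groups_sub fuel Np r : nth set0 (groups_aux v w own p fuel Np) r \subset Np.
Proof.
elim: fuel Np r => [|f IH] Np r /=; first by rewrite nth_nil sub0set.
case: pickP => [l _|_]; last by rewrite nth_nil sub0set.
case: r => [|r] /=.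
  by apply/subsetP => j; rewrite inE => /andP[].
apply: subset_trans (IH _ r) _; exact: subsetDl.
Qed.

Lemma groups_spec fuel Np r : (r < size (groups_aux v w own p fuel Np))%N ->
  exists Np' l, [/\ leaderb v w own Np' l,
    nth set0 (groups_aux v w own p fuel Np) r = [set j in Np' | connect (mbb_edge v own p) l j] &
    forall r', (r < r')%N -> nth set0 (groups_aux v w own p fuel Np) r' \subset
       Np' :\: nth set0 (groups_aux v w own p fuel Np) r].
Proof.
elim: fuel Np r => [|f IH] Np r /=; first by [].
case: pickP => [l Hl|_] //=.
case: r => [|r] /=.
  move=> _; exists Np, l; split => //.
  by case=> [|r'] //= _; apply: groups_sub.
rewrite ltnS => /IH [Np' [l' [H1 H2 H3]]].
exists Np', l'; split => //.
move=> [|r'] //= Hr; exact: H3.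
Qed.

Lemma groups_first fuel (Np : {set 'I_n}) (x0 : 'I_n) : (0 < fuel)%N -> x0 \in Np ->
  exists l, nth set0 (groups_aux v w own p fuel Np) 0 = [set j in Np | connect (mbb_edge v own p) l j].
Proof.
case: fuel => [|f] //= _ Hx0.
case: pickP => [l _|H]; first by exists l.
have [l Hl] := @leader_exists Np x0 Hx0.
by rewrite H in Hl.
Qed.
End Aux.

Theorem lemma4p2 (R : realFieldType) (n : nat) (M : finType)
  (k : R) (v : 'I_n -> M -> R) (w : 'I_n -> R)
  (own : M -> 'I_n) (p : M -> R) :
  (* bivalued instance *)
  1 < k ->
  (forall i e, v i e = 1 \/ v i e = k) ->
  (forall i, 0 < w i) ->
  \sum_(i < n) w i = 1 ->
  (* prices *)
  (forall e, e \in Mplus v -> p e = k) ->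
  (forall e, e \in Mminus v -> p e = 1) ->
  (* equilibrium with alpha_i = 1 *)
  is_equilibrium v own p ->
  (forall i, alpha v p i = 1) ->
  (* condition along MBB paths i_0 -> ... -> i_s, s >= 1 *)
  (forall (i0 : 'I_n) (s : seq 'I_n), s != [::] ->
     path (mbb_edge v own p) i0 s ->
     forall e, e \in bundle own (last i0 s) ->
       valS v (last i0 s) (bundle own (last i0 s) :\ e) / w (last i0 s)
       <= valS v i0 (bundle own i0) / w i0) ->
  let G := groups v w own p in
  (* (1) *)
  (forall (r r' : nat), (r < r')%N -> (r' < size G)%N ->
     forall i j, i \in nth set0 G r -> j \in nth set0 G r' ->
     forall e, e \in bundle own j -> v i e = 1) /\
  (* (2) *)
  (Mminus v \subset \bigcup_(i in nth set0 G 0) bundle own i) /\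
  (* (3) *)
  (forall (r : nat), (r < size G)%N ->
     forall i j, i \in nth set0 G r -> j \in nth set0 G r ->
     forall e, e \in bundle own j ->
       valS v j (bundle own j :\ e) / w j <= valS v i (bundle own i) / w i).

Proof.
move=> Hk Hv Hw _ HpP HpM Heq Halpha Hpath G.
have kpos : 0 < k by apply: lt_trans Hk; exact: ltr01.
have pne0 : forall e, p e != 0.
  move=> e; case: (boolP (e \in Mminus v)) => He.
    by rewrite HpM // oner_neq0.
  by rewrite HpP ?gt_eqF // /Mplus in_setC He.
have inMBB : forall i e, v i e = p e -> e \in MBB v p i.
  move=> i e H; rewrite /MBB inE /alpha_ie Halpha H divff //.
have vpos : forall i e, 0 <= v i e.
  by move=> i e; case: (Hv i e) => ->; [exact: ler01 | exact: ltW].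
rewrite /G /groups.
split; [|split].
- move=> r r' Hrr' Hr' i j Hi Hj e He.
  have [Np' [l [Hl HG Hsub]]] := @groups_spec _ _ _ v w own p _ _ _ (ltn_trans Hrr' Hr').
  have := subsetP (Hsub r' Hrr') j Hj; rewrite inE => /andP [Hjn HjNp].
  move: Hi; rewrite HG inE => /andP [HiNp Hli].
  case: (Hv i e) => // Hik; exfalso.
  apply: (negP Hjn); rewrite HG inE HjNp /=.
  apply: connect_trans Hli (connect1 _).
  apply/existsP; exists e; rewrite He andbT; apply: inMBB.
  rewrite Hik HpP // /Mplus in_setC /Mminus inE; apply/negP => /forallP /(_ i) /eqP.
  by rewrite Hik => Hk1; rewrite Hk1 ltxx in Hk.
- apply/subsetP => e He.
  have Hn : (0 < n)%N := leq_ltn_trans (leq0n _) (ltn_ord (own e)).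
  have [l Hl] := @groups_first _ _ _ v w own p _ _ _ Hn (in_setT (own e)).
  apply/bigcupP; exists (own e); last by rewrite /bundle inE.
  rewrite Hl inE in_setT /=; apply: connect1; apply/existsP; exists e.
  rewrite /bundle inE eqxx andbT; apply: inMBB; rewrite HpM //.
  by move: He; rewrite inE => /forallP /(_ l) /eqP.
- move=> r Hr i j Hi Hj e He.
  have [Np' [l [Hl HG _]]] := @groups_spec _ _ _ v w own p _ _ _ Hr.
  move: Hi Hj; rewrite HG !inE => /andP [HiNp Hli] /andP [HjNp Hlj].
  have Hratio : Defs.ratio v w own l <= Defs.ratio v w own i.
    by move: Hl => /and3P [_ /forallP /(_ i) /implyP /(_ HiNp) H _].
  apply: le_trans _ Hratio; rewrite /Defs.ratio.
  case/connectP: Hlj => s Hs Hjl.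
  case: s Hs Hjl => [|a s] Hs Hjl.
    rewrite /= in Hjl; subst j.
    rewrite ler_pM2r ?invr_gt0 // /valS (big_setD1 _ He) /= lerDr; exact: vpos.
  by have := Hpath l (a :: s) isT Hs e; rewrite -Hjl; apply.
Qed.
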